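(* Let $f:(M,g_M)\to(N,g_N)$ be a smooth map between Riemannian manifolds. Then $f$ is a conformal Riemannian morphism if and only if there exist a smooth function $\wedge_f:M\to\mathbb{R}^{+}$ and, for each $x\in M$, a linear subspace $H_x\subset T_xM$ with $T_xM=H_x\oplus\ker(df_x)$, such that $Q_{H_x}\circ Q_{H_x}=\wedge_f(x)\,Q_{H_x}$ for all $x\in M$.
   Context: A linear map $T:V\to W$ between real inner-product spaces is a geometric function if there exist a subspace $C\subset V$ with $V=\ker T\oplus C$ and $r>0$ with $\langle T u,T v\rangle=r\langle u,v\rangle$ for all $u,v\in C$ ($r$ is a conformality factor). A smooth $f:(M,g_M)\to(N,g_N)$ is a conformal Riemannian morphism if there is a smooth $\wedge_f:M\to\mathbb{R}^{+}$ such that each $df_x$ is a geometric function with conformality factor $\wedge_f(x)$. For a subspace $H_x\subset T_xM$ with $H_x\oplus\ker(df_x)=T_xM$, define the linear map $(df_{H_x})^{\diamond}:T_{f(x)}N\to T_xM$ by $(df_{H_x})^{\diamond}(X)=((df_x)|_{H_x})^{*}(X)$ if $X\in\mathrm{range}(df_x)$ and $(df_{H_x})^{\diamond}(X)=0$ if $X\in\mathrm{range}(df_x)^{\perp}$, where $((df_x)|_{H_x})^{*}$ is the adjoint of $(df_x)|_{H_x}:H_x\to\mathrm{range}(df_x)$. Set $Q_{H_x}=df_x\circ(df_{H_x})^{\diamond}:T_{f(x)}N\to T_{f(x)}N$. *)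

(* Defs.v *)
(* Pointwise (coordinate) model of a smooth map between
   Riemannian manifolds. *)
From HB Require Import structures.
From mathcomp Require Import all_boot all_order all_algebra.
From mathcomp Require Import reals.
From Stdlib Require Import ClassicalEpsilon.
Set Implicit Arguments. Unset Strict Implicit. Unset Printing Implicit Defensive.
Import Order.TTheory GRing.Theory Num.Theory.
Local Open Scope ring_scope.

Section Defs.
Variable R : realType.

Definition ip k (G : 'M[R]_k) (u v : 'rV[R]_k) : R := (u *m G *m v^T) 0 0.

Definition inner_product_mx k (G : 'M[R]_k) : Prop :=
  G^T = G /\ forall u : 'rV[R]_k, u != 0 -> 0 < ip G u u.

(* Linear maps T : V -> W are matrices acting on row vectors: v |-> v *m T.
   ker T is the row space of kermx T; range T is the row space of T.
   Subspaces of R^m are row spaces of square matrices. *)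

Definition complement_of_ker m n (T : 'M[R]_(m, n)) (C : 'M[R]_m) : Prop :=
  mxdirect (C + kermx T) /\ (C + kermx T == 1%:M)%MS.

Definition geometric_with m n (gV : 'M[R]_m) (gW : 'M[R]_n)
    (T : 'M[R]_(m, n)) (r : R) : Prop :=
  exists C : 'M[R]_m, complement_of_ker T C /\ 0 < r /\
    forall u v : 'rV[R]_m, (u <= C)%MS -> (v <= C)%MS ->
      ip gW (u *m T) (v *m T) = r * ip gV u v.

(* P is (df_H)^diamond : on range T it is the adjoint of T|_H : H -> range T,
   on (range T)^perp it is 0. *)
Definition is_diamond m n (gV : 'M[R]_m) (gW : 'M[R]_n)
    (T : 'M[R]_(m, n)) (H : 'M[R]_m) (P : 'M[R]_(n, m)) : Prop :=
  (forall X : 'rV[R]_n, (X <= T)%MS ->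
     (X *m P <= H)%MS /\
     forall u : 'rV[R]_m, (u <= H)%MS -> ip gV u (X *m P) = ip gW (u *m T) X)
  /\ (forall X : 'rV[R]_n,
        (forall u : 'rV[R]_m, ip gW (u *m T) X = 0) -> X *m P = 0).

Definition diamond m n (gV : 'M[R]_m) (gW : 'M[R]_n)
    (T : 'M[R]_(m, n)) (H : 'M[R]_m) : 'M[R]_(n, m) :=
  epsilon (inhabits 0) (is_diamond gV gW T H).

(* Q_H = df o (df_H)^diamond : T_{f x} N -> T_{f x} N *)
Definition Qmap m n (gV : 'M[R]_m) (gW : 'M[R]_n)
    (T : 'M[R]_(m, n)) (H : 'M[R]_m) : 'M[R]_n :=
  diamond gV gW T H *m T.

Definition conformal_riemannian_morphism (M N : Type) m n
    (smooth : (M -> R) -> Prop) (f : M -> N)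
    (gM : M -> 'M[R]_m) (gN : N -> 'M[R]_n) (df : M -> 'M[R]_(m, n)) : Prop :=
  exists lam : M -> R, smooth lam /\ (forall x, 0 < lam x) /\
    forall x, geometric_with (gM x) (gN (f x)) (df x) (lam x).

End Defs.

(* Main.v *)
Require Import Defs.
From HB Require Import structures.
From mathcomp Require Import all_boot all_order all_algebra.
From mathcomp Require Import reals.
From Stdlib Require Import ClassicalEpsilon.
Set Implicit Arguments. Unset Strict Implicit. Unset Printing Implicit Defensive.
Import Order.TTheory GRing.Theory Num.Theory.
Local Open Scope ring_scope.

Section Aux.
Variable R : realType.

Lemma ipBr k (g : 'M[R]_k) u v w : ip g u (v - w) = ip g u v - ip g u w.
Proof. by rewrite /ip (linearB (@trmx R 1 k)) mulmxBr !mxE. Qed.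

Lemma ipZr k (g : 'M[R]_k) u a v : ip g u (a *: v) = a * ip g u v.
Proof.
rewrite /ip; have -> : (a *: v)^T = a *: v^T by apply/matrixP=> i j; rewrite !mxE.
by rewrite -scalemxAr !mxE.
Qed.

Lemma ip_eq0 k (g : 'M[R]_k) (hg : inner_product_mx g) u :
  ip g u u = 0 -> u = 0.
Proof.
case: (eqVneq u 0) => // /(proj2 hg) h e; by rewrite e ltxx in h.
Qed.

Lemma vec_eq0 p (w : 'cV[R]_p) : (forall u : 'rV_p, (u *m w) 0 0 = 0) -> w = 0.
Proof.
move=> h; apply/matrixP=> i j; rewrite (ord1 j) [RHS]mxE.
by have := h (delta_mx 0 i); rewrite -rowE mxE.
Qed.

Lemma posdef_unit k p (B : 'M[R]_(k,p)) g (hg : inner_product_mx g)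
  (fB : row_free B) : B *m g *m B^T \in unitmx.
Proof.
rewrite unitmxE unitfE; apply/det0P => -[c c0 hc].
have : c *m B != 0 by rewrite mulmx_free_eq0.
move/(proj2 hg); rewrite /ip.
have -> : c *m B *m g *m (c *m B)^T = c *m (B *m g *m B^T) *m c^T
  by rewrite trmx_mul !mulmxA.
by rewrite hc mul0mx mxE ltxx.
Qed.

Definition rep k p q (B : 'M[R]_(k,p)) (g : 'M_p) (S : 'M_(p,q)) : 'M_(q,p) :=
  S^T *m B^T *m (invmx (B *m g *m B^T))^T *m B.

Lemma rep_sub k p q (B : 'M[R]_(k,p)) g (S : 'M_(p,q)) (X : 'rV_q) :
  (X *m rep B g S <= B)%MS.
Proof. by rewrite /rep !mulmxA submxMl. Qed.

Lemma rep_ip k p q (B : 'M[R]_(k,p)) g (S : 'M_(p,q))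
  (hg : inner_product_mx g) (fB : row_free B) (X : 'rV_q) u :
  (u <= B)%MS -> ip g u (X *m rep B g S) = (u *m S *m X^T) 0 0.
Proof.
move/submxP=> [d ->]; rewrite /ip /rep.
have e : d *m B *m g *m (X *m (S^T *m B^T *m (invmx (B *m g *m B^T))^T *m B))^T
   = d *m (B *m g *m B^T) *m invmx (B *m g *m B^T) *m B *m S *m X^T
  by rewrite !trmx_mul !trmxK !mulmxA.
by rewrite e mulmxK // posdef_unit.
Qed.

Lemma diamond_spec m n (gV : 'M[R]_m) (gW : 'M[R]_n) T H
  (hV : inner_product_mx gV) (hW : inner_product_mx gW) :
  is_diamond gV gW T H (diamond gV gW T H).
Proof.
rewrite /diamond; apply: epsilon_spec.
exists (rep (row_base H) gV (T *m gW)); split.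
  move=> X _; split; first by rewrite -(eq_row_base H) rep_sub.
  move=> u uH; rewrite rep_ip ?eq_row_base ?row_base_free // /ip !mulmxA //.
move=> X hX; rewrite /rep !mulmxA.
have h0 : T *m gW *m X^T = 0 by apply: vec_eq0 => u; rewrite !mulmxA; exact: hX.
have -> : X *m (T *m gW)^T = (T *m gW *m X^T)^T by rewrite !trmx_mul trmxK mulmxA.
by rewrite h0 trmx0 !mul0mx.
Qed.

Lemma decomp m n (gW : 'M[R]_n) (hW : inner_product_mx gW) (T : 'M_(m,n)) X :
  exists X1, (X1 <= T)%MS /\ forall u, ip gW (u *m T) (X - X1) = 0.
Proof.
exists (X *m rep (row_base T) gW gW); split.
  by rewrite -(eq_row_base T) rep_sub.
move=> u; rewrite ipBr rep_ip ?eq_row_base ?row_base_free ?submxMl //.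
by rewrite /ip subrr.
Qed.

Lemma inj_H m n (T : 'M[R]_(m,n)) H (d : 'rV_m) : complement_of_ker T H ->
  (d <= H)%MS -> d *m T = 0 -> d = 0.
Proof.
move=> [/mxdirect_addsP hd _] dH dT; apply/eqP.
by rewrite -submx0 -hd sub_capmx dH sub_kermx dT eqxx.
Qed.

End Aux.

Theorem mainTheorem4 (R : realType) (M N : Type) (m n : nat)
    (smooth : (M -> R) -> Prop) (f : M -> N)
    (gM : M -> 'M[R]_m) (gN : N -> 'M[R]_n) (df : M -> 'M[R]_(m, n))
    (hgM : forall x, inner_product_mx (gM x))
    (hgN : forall y, inner_product_mx (gN y)) :
  conformal_riemannian_morphism smooth f gM gN df <->
  exists (lam : M -> R) (H : M -> 'M[R]_m),
    smooth lam /\ (forall x, 0 < lam x) /\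
    (forall x, complement_of_ker (df x) (H x)) /\
    forall x,
      Qmap (gM x) (gN (f x)) (df x) (H x) *m Qmap (gM x) (gN (f x)) (df x) (H x)
      = lam x *: Qmap (gM x) (gN (f x)) (df x) (H x).
Proof.
split.
  move=> [lam [sm [pos geo]]].
  pose PP x C := complement_of_ker (df x) C /\ forall u v : 'rV[R]_m,
     (u <= C)%MS -> (v <= C)%MS ->
     ip (gN (f x)) (u *m df x) (v *m df x) = lam x * ip (gM x) u v.
  have hH : forall x, PP x (epsilon (inhabits 0) (PP x)).
    move=> x; apply: epsilon_spec; have [C [hc [_ hC]]] := geo x.
    by exists C.
  exists lam, (fun x => epsilon (inhabits 0) (PP x)).
  split=> //; split=> //; split=> x; first exact: (hH x).1.
  set H := epsilon _ _.
  have [hc hconf] := hH x.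
  have [s1 s3] := diamond_spec (df x) H (hgM x) (hgN (f x)).
  set P := diamond _ _ _ _ in s1 s3 *.
  apply/row_matrixP => i; rewrite !rowE; set X := delta_mx 0 i.
  rewrite /Qmap -/P -scalemxAr !mulmxA.
  have [X1 [X1T hX2]] := decomp (hgN (f x)) (df x) X.
  have eXP : X *m P = X1 *m P.
    by have := s3 _ hX2; rewrite mulmxBl => /eqP; rewrite subr_eq0 => /eqP.
  rewrite eXP.
  have [YH hY] := s1 _ X1T.
  have [WH hW] := s1 (X1 *m P *m df x) (submxMl _ _).
  have e : X1 *m P *m df x *m P = lam x *: (X1 *m P).
    apply/eqP; rewrite -subr_eq0; apply/eqP; apply: (ip_eq0 (hgM x)).
    have DH : (X1 *m P *m df x *m P - lam x *: (X1 *m P) <= H)%MS.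
      by rewrite addmx_sub // eqmx_opp scalemx_sub.
    by rewrite ipBr ipZr hW // hconf // subrr.
  by rewrite e -scalemxAl.
move=> [lam [H [sm [pos [hc hQ]]]]].
exists lam; split=> //; split=> // x.
exists (H x); split; first exact: hc.
split; first exact: pos.
move=> u v uH vH.
have [s1 s3] := diamond_spec (df x) (H x) (hgM x) (hgN (f x)).
set P := diamond _ _ _ _ in s1 s3 hQ.
have inj := inj_H (hc x).
have [SvH hSv] := s1 (v *m df x) (submxMl _ _).
set Sv := v *m df x *m P in SvH hSv.
have [SSvH hSSv] := s1 (Sv *m df x) (submxMl _ _).
have e1 : Sv *m df x *m P = lam x *: Sv.
  apply/eqP; rewrite -subr_eq0; apply/eqP; apply: inj.
    by rewrite addmx_sub // eqmx_opp scalemx_sub.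
  have := congr1 (mulmx (v *m df x)) (hQ x).
  rewrite /Qmap -/P -scalemxAr !mulmxA => h.
  by rewrite mulmxBl -scalemxAl /Sv h subrr.
have eS : Sv = lam x *: v.
  apply/eqP; rewrite -subr_eq0; apply/eqP; apply: inj.
    by rewrite addmx_sub // eqmx_opp scalemx_sub.
  apply: (ip_eq0 (hgN (f x))).
  have wH : (Sv - lam x *: v <= H x)%MS
    by rewrite addmx_sub // eqmx_opp scalemx_sub.
  have [_ hw] := s1 ((Sv - lam x *: v) *m df x) (submxMl _ _).
  rewrite -hw // !mulmxBl e1 -!scalemxAl -/Sv subrr.
  by rewrite /ip trmx0 mulmx0 mxE.
by rewrite -(hSv u uH) eS ipZr.
Qed.
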